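(* The monads $\mathbb J=(J,\eta,\psi)$ and $\mathbb I=(I,\eta,\zeta)$ are not isomorphic; that is, there is no natural isomorphism $k\colon I\to J$ of functors with $k\circ\eta=\eta$ and $k_X\circ\zeta_X=\psi_X\circ J(k_X)\circ k_{I(X)}$ for all $X$.
   Context: A max-min measure on a compact Hausdorff space $X$ is a functional $\mu\colon C(X)\to\mathbb R$ (not assumed continuous) with $\mu(c_X)=c$ for constants, $\mu(\varphi\vee\psi)=\mu(\varphi)\vee\mu(\psi)$, $\mu(c\wedge\varphi)=c\wedge\mu(\varphi)$ for $c\in\mathbb R$. A max-plus (idempotent) measure is a functional $\mu\colon C(X)\to\mathbb R$ with $\mu(c_X)=c$, $\mu(\varphi\vee\psi)=\mu(\varphi)\vee\mu(\psi)$, $\mu(c_X+\varphi)=c+\mu(\varphi)$. $J(X)$, $I(X)$ are the respective sets with the topology of pointwise convergence on $C(X)$; on maps, $J(f)(\mu)=\mu(\cdot\circ f)$, $I(f)(\mu)=\mu(\cdot\circ f)$. In both monads the unit is $\eta_X(x)=\delta_x$, $\delta_x(\varphi)=\varphi(x)$. The multiplications are $\psi_X\colon J(J(X))\to J(X)$, $\psi_X(M)(\varphi)=M(\bar\varphi)$, and $\zeta_X\colon I(I(X))\to I(X)$, $\zeta_X(M)(\varphi)=M(\bar\varphi)$, where $\bar\varphi(\mu)=\mu(\varphi)$; in particular $\zeta_X(\vee_{i=1}^n(\beta_i+\delta_{\mu_i}))=\vee_{i=1}^n(\beta_i+\mu_i)$ for $\beta_i\in[-\infty,0]$ with $\max_i\beta_i=0$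 and $\mu_i\in I(X)$, and $\psi_X(\vee_{i=1}^n(\alpha_i\wedge\delta_{\mu_i}))=\vee_{i=1}^n(\alpha_i\wedge\mu_i)$ for $\alpha_i\in\mathbb R\cup\{\infty\}$ with $\max_i\alpha_i=\infty$, $\mu_i\in J(X)$. The monads are considered on the category $\mathbf{Comp}$ of compact Hausdorff spaces. *)

(* Defs.v *)
From Stdlib Require Import Reals Lra List.
Open Scope R_scope.
Set Implicit Arguments.

Record TopSpace := {
  carrier :> Type;
  open : (carrier -> Prop) -> Prop;
  open_full : open (fun _ => True);
  open_inter : forall U V, open U -> open V -> open (fun x => U x /\ V x);
  open_union : forall F : (carrier -> Prop) -> Prop,
      (forall U, F U -> open U) -> open (fun x => exists U, F U /\ U x)
}.

Definition compact (X : TopSpace) : Prop :=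
  forall F : (X -> Prop) -> Prop,
    (forall U, F U -> open X U) ->
    (forall x, exists U, F U /\ U x) ->
    exists l : list (X -> Prop),
      (forall U, In U l -> F U) /\ (forall x, exists U, In U l /\ U x).

Definition hausdorff (X : TopSpace) : Prop :=
  forall x y : X, x <> y ->
    exists U V, open X U /\ open X V /\ U x /\ V y /\ (forall z, ~ (U z /\ V z)).

Definition CompHaus (X : TopSpace) : Prop := compact X /\ hausdorff X.

Definition continuous {X Y : TopSpace} (f : X -> Y) : Prop :=
  forall V, open Y V -> open X (fun x => V (f x)).

Record cmap (X Y : TopSpace) := { cfun :> X -> Y; cfun_cont : continuous cfun }.

Definition R_open (U : R -> Prop) : Prop :=
  forall x, U x -> exists e, 0 < e /\ forall y, Rabs (y - x) < e -> U y.

Lemma R_open_full : R_open (fun _ => True).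
Proof. intros x _; exists 1; split; [lra | auto]. Qed.

Lemma R_open_inter : forall U V, R_open U -> R_open V -> R_open (fun x => U x /\ V x).
Proof.
  intros U V HU HV x [Ux Vx].
  destruct (HU x Ux) as [e1 [He1 H1]]; destruct (HV x Vx) as [e2 [He2 H2]].
  exists (Rmin e1 e2); split.
  - apply Rmin_pos; assumption.
  - intros y Hy; split.
    + apply H1; eapply Rlt_le_trans; [exact Hy | apply Rmin_l].
    + apply H2; eapply Rlt_le_trans; [exact Hy | apply Rmin_r].
Qed.

Lemma R_open_union : forall F : (R -> Prop) -> Prop,
  (forall U, F U -> R_open U) -> R_open (fun x => exists U, F U /\ U x).
Proof.
  intros F HF x [U [FU Ux]].
  destruct (HF U FU x Ux) as [e [He H]].
  exists e; split; [exact He|]. intros y Hy; exists U; auto.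
Qed.

Definition R_top : TopSpace :=
  {| carrier := R; open := R_open; open_full := R_open_full;
     open_inter := R_open_inter; open_union := R_open_union |}.

Definition C (X : TopSpace) := cmap X R_top.

Definition ccomp {X Y : TopSpace} (phi : C Y) (f : cmap X Y) : C X :=
  {| cfun := fun x => phi (f x);
     cfun_cont := fun V hV => cfun_cont f _ (cfun_cont phi V hV) |}.

Inductive gen_open {T : Type} (S : (T -> Prop) -> Prop) : (T -> Prop) -> Prop :=
  | go_sub : forall U, S U -> gen_open S U
  | go_full : gen_open S (fun _ => True)
  | go_inter : forall U V, gen_open S U -> gen_open S V -> gen_open S (fun x => U x /\ V x)
  | go_union : forall F : (T -> Prop) -> Prop,
      (forall U, F U -> gen_open S U) -> gen_open S (fun x => exists U, F U /\ U x).

Definition gen_top (T : Type) (S : (T -> Prop) -> Prop) : TopSpace :=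
  {| carrier := T; open := gen_open S; open_full := @go_full T S;
     open_inter := @go_inter T S; open_union := @go_union T S |}.

(** Topology of pointwise convergence on a set of functionals C(X) -> R *)
Definition pw_sub (X : TopSpace) (P : (C X -> R) -> Prop)
  : ({m : C X -> R | P m} -> Prop) -> Prop :=
  fun V => exists (phi : C X) (U : R -> Prop),
     R_open U /\ forall mu, V mu <-> U (proj1_sig mu phi).

Definition pw_top (X : TopSpace) (P : (C X -> R) -> Prop) : TopSpace :=
  gen_top (@pw_sub X P).

Definition bar {X : TopSpace} {P : (C X -> R) -> Prop} (phi : C X)
  : C (@pw_top X P) :=
  {| cfun := fun mu : @pw_top X P => (proj1_sig mu phi : R_top);
     cfun_cont := fun V hV =>
        @go_sub _ (@pw_sub X P) _ (ex_intro _ phi (ex_intro _ V (conj hV (fun mu => iff_refl _)))) |}.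

Definition is_maxmin {X : TopSpace} (mu : C X -> R) : Prop :=
  (forall (phi : C X) (c : R), (forall x, phi x = c) -> mu phi = c) /\
  (forall phi psi chi : C X, (forall x, chi x = Rmax (phi x) (psi x)) ->
        mu chi = Rmax (mu phi) (mu psi)) /\
  (forall (c : R) (phi chi : C X), (forall x, chi x = Rmin c (phi x)) ->
        mu chi = Rmin c (mu phi)).

Definition is_maxplus {X : TopSpace} (mu : C X -> R) : Prop :=
  (forall (phi : C X) (c : R), (forall x, phi x = c) -> mu phi = c) /\
  (forall phi psi chi : C X, (forall x, chi x = Rmax (phi x) (psi x)) ->
        mu chi = Rmax (mu phi) (mu psi)) /\
  (forall (c : R) (phi chi : C X), (forall x, chi x = c + phi x) ->
        mu chi = c + mu phi).

Definition J (X : TopSpace) : TopSpace := @pw_top X (@is_maxmin X).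
Definition I (X : TopSpace) : TopSpace := @pw_top X (@is_maxplus X).

Definition J_map {X Y : TopSpace} (f : cmap X Y) (mu : J X) : J Y.
Proof.
  refine (exist _ (fun phi => proj1_sig mu (ccomp phi f)) _).
  destruct mu as [m [H1 [H2 H3]]]; simpl.
  split; [|split].
  - intros phi c H; apply H1; intros x; apply H.
  - intros phi psi chi H; apply H2; intros x; apply H.
  - intros c phi chi H; apply H3; intros x; apply H.
Defined.

Definition I_map {X Y : TopSpace} (f : cmap X Y) (mu : I X) : I Y.
Proof.
  refine (exist _ (fun phi => proj1_sig mu (ccomp phi f)) _).
  destruct mu as [m [H1 [H2 H3]]]; simpl.
  split; [|split].
  - intros phi c H; apply H1; intros x; apply H.
  - intros phi psi chi H; apply H2; intros x; apply H.
  - intros c phi chi H; apply H3; intros x; apply H.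
Defined.

Definition deltaJ (X : TopSpace) (x : X) : J X.
Proof.
  refine (exist _ (fun phi : C X => phi x) _).
  split; [|split]; intros; auto.
Defined.

Definition deltaI (X : TopSpace) (x : X) : I X.
Proof.
  refine (exist _ (fun phi : C X => phi x) _).
  split; [|split]; intros; auto.
Defined.

Definition psi (X : TopSpace) (M : J (J X)) : J X.
Proof.
  refine (exist _ (fun phi : C X => proj1_sig M (@bar X (@is_maxmin X) phi)) _).
  destruct M as [m [H1 [H2 H3]]]; simpl.
  split; [|split].
  - intros phi c H; apply H1; intros [mu [K1 [K2 K3]]]; simpl; apply K1; exact H.
  - intros phi ps chi H; apply H2; intros [mu [K1 [K2 K3]]]; simpl; apply K2; exact H.
  - intros c phi chi H; apply H3; intros [mu [K1 [K2 K3]]]; simpl; apply K3; exact H.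
Defined.

Definition zeta (X : TopSpace) (M : I (I X)) : I X.
Proof.
  refine (exist _ (fun phi : C X => proj1_sig M (@bar X (@is_maxplus X) phi)) _).
  destruct M as [m [H1 [H2 H3]]]; simpl.
  split; [|split].
  - intros phi c H; apply H1; intros [mu [K1 [K2 K3]]]; simpl; apply K1; exact H.
  - intros phi ps chi H; apply H2; intros [mu [K1 [K2 K3]]]; simpl; apply K2; exact H.
  - intros c phi chi H; apply H3; intros [mu [K1 [K2 K3]]]; simpl; apply K3; exact H.
Defined.

(* Main.v *)
Require Import Defs.
From Stdlib Require Import Reals.
From Stdlib Require Import Lra List ProofIrrelevance FunctionalExtensionality ClassicalEpsilon Classical.
Open Scope R_scope.

Program Definition bool_top : TopSpace :=
  {| carrier := bool; open := fun _ => True |}.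

Lemma bool_CH : CompHaus bool_top.
Proof.
  split.
  - intros F HF Hc.
    destruct (Hc true) as [U [FU Ut]]. destruct (Hc false) as [V [FV Vf]].
    exists (U :: V :: nil). split.
    + intros W [<-|[<-|[]]]; auto.
    + intros [|]; [exists U|exists V]; simpl; auto.
  - intros x y Hxy. exists (fun z => z = x), (fun z => z = y).
    repeat split; simpl; auto. intros z [-> ->]; auto.
Qed.

Definition mkC (g : bool -> R) : Defs.C bool_top :=
  {| cfun := (g : bool_top -> R_top); cfun_cont := fun V _ => Logic.I |}.

Lemma sig_ext {A : Type} {P : A -> Prop} (a b : {x | P x}) :
  proj1_sig a = proj1_sig b -> a = b.
Proof. destruct a, b; simpl; intros ->; f_equal; apply proof_irrelevance. Qed.

Lemma ball_open (a d : R) : R_open (fun r => Rabs (r - a) < d).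
Proof.
  intros x Hx. exists (d - Rabs (x - a)). split; [lra|].
  intros y Hy. pose proof (Rabs_triang (y - x) (x - a)).
  replace (y - x + (x - a)) with (y - a) in H by ring. lra.
Qed.

Lemma pw_hausdorff (X : TopSpace) (P : (Defs.C X -> R) -> Prop) : hausdorff (pw_top P).
Proof.
  intros m1 m2 Hne.
  assert (exists phi, proj1_sig m1 phi <> proj1_sig m2 phi) as [phi Hphi].
  { apply NNPP; intro Hn. apply Hne. apply sig_ext. apply functional_extensionality.
    intro phi. apply NNPP; intro H'; apply Hn; exists phi; exact H'. }
  set (a := proj1_sig m1 phi) in *. set (b := proj1_sig m2 phi) in *.
  set (d := Rabs (a - b) / 2).
  assert (Hd : 0 < Rabs (a - b)) by (apply Rabs_pos_lt; lra).
  exists (fun mu : pw_top P => Rabs (proj1_sig mu phi - a) < d),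
         (fun mu : pw_top P => Rabs (proj1_sig mu phi - b) < d).
  split; [|split; [|split; [|split]]].
  - apply go_sub. exists phi, (fun r => Rabs (r - a) < d). split; [apply ball_open|]. intro; tauto.
  - apply go_sub. exists phi, (fun r => Rabs (r - b) < d). split; [apply ball_open|]. intro; tauto.
  - simpl. fold a. unfold d. rewrite Rminus_diag, Rabs_R0. lra.
  - simpl. fold b. unfold d. rewrite Rminus_diag, Rabs_R0. lra.
  - intros z [H1 H2]. pose proof (Rabs_triang (a - proj1_sig z phi) (proj1_sig z phi - b)).
    replace (a - proj1_sig z phi + (proj1_sig z phi - b)) with (a - b) in H by ring.
    rewrite <- Rabs_Ropp in H1. replace (- (proj1_sig z phi - a)) with (a - proj1_sig z phi) in H1 by ring.
    unfold d in *. lra.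
Qed.

Ltac rmm := unfold Rmax, Rmin in *; repeat destruct Rle_dec; lra.

Lemma J_decomp (m : Defs.C bool_top -> R) (Hm : is_maxmin m) (L : R) (psi : Defs.C bool_top) :
  Rabs (psi true) < L -> Rabs (psi false) < L ->
  m psi = Rmax (Rmin (psi true) (m (mkC (fun b => if b then L else -L))))
               (Rmin (psi false) (m (mkC (fun b => if b then -L else L)))).
Proof.
  destruct Hm as [H1 [H2 H3]]. intros Ht Hf.
  apply Rabs_def2 in Ht; apply Rabs_def2 in Hf.
  rewrite <- (H3 (psi true) _ (mkC (fun b => Rmin (psi true) (if b then L else -L)))) by reflexivity.
  rewrite <- (H3 (psi false) _ (mkC (fun b => Rmin (psi false) (if b then -L else L)))) by reflexivity.
  apply H2. intros [|]; simpl; rmm.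
Qed.

Lemma J_key (m : Defs.C bool_top -> R) (Hm : is_maxmin m) (phi chi : Defs.C bool_top) :
  chi true = phi true -> chi false = m phi -> m chi = m phi.
Proof.
  intros E1 E2.
  set (L := Rabs (phi true) + Rabs (phi false) + Rabs (m phi) + 1).
  assert (HL : L = Rmax (m (mkC (fun b => if b then L else -L))) (m (mkC (fun b => if b then -L else L)))).
  { destruct Hm as [H1 [H2 H3]]. rewrite <- (H2 _ _ (mkC (fun _ => L))).
    - symmetry; apply H1; reflexivity.
    - intros [|]; simpl; unfold L; pose proof (Rabs_pos (phi true)); pose proof (Rabs_pos (phi false));
      pose proof (Rabs_pos (m phi)); rmm. }
  pose proof (Rabs_pos (phi true)); pose proof (Rabs_pos (phi false)); pose proof (Rabs_pos (m phi)).
  assert (Ht : Rabs (phi true) < L) by (unfold L; lra).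
  assert (Hf : Rabs (phi false) < L) by (unfold L; lra).
  assert (Hv : Rabs (m phi) < L) by (unfold L; lra).
  pose proof (J_decomp m Hm L phi Ht Hf) as Dphi.
  pose proof (J_decomp m Hm L chi (eq_ind_r (fun z => Rabs z < L) Ht E1) (eq_ind_r (fun z => Rabs z < L) Hv E2)) as Dchi.
  rewrite E1, E2 in Dchi. rewrite Dchi.
  set (A := m (mkC (fun b => if b then L else -L))) in *.
  set (B := m (mkC (fun b => if b then -L else L))) in *.
  set (v := m phi) in *. clearbody A B v.
  apply Rabs_def2 in Ht; apply Rabs_def2 in Hf; apply Rabs_def2 in Hv.
  clearbody L. rewrite Dphi. rewrite Dphi in Hv. rmm.
Qed.

Definition W0 t := Rmin 1 (Rmax 0 (1 - t)).
Definition W1 t := Rmin 1 (Rmax 0 (1 + t)).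
Definition Ef (t : R) (g : Defs.C bool_top) := Rmax (W0 t * exp (g true)) (W1 t * exp (g false)).

Lemma W_props t : 0 <= W0 t <= 1 /\ 0 <= W1 t <= 1 /\ (W0 t = 1 \/ W1 t = 1).
Proof. unfold W0, W1. split; [|split]; rmm. Qed.

Lemma Ef_pos t g : 0 < Ef t g.
Proof.
  destruct (W_props t) as [[? ?] [[? ?] [E|E]]]; unfold Ef; rewrite E;
  pose proof (exp_pos (g true)); pose proof (exp_pos (g false)); unfold Rmax; destruct Rle_dec; nra.
Qed.

Lemma exp_max x y : exp (Rmax x y) = Rmax (exp x) (exp y).
Proof.
  unfold Rmax; destruct (Rle_dec x y), (Rle_dec (exp x) (exp y)); auto.
  - destruct r; [exfalso; apply n; left; apply exp_increasing; auto | subst; auto].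
  - assert (exp y < exp x) by (apply exp_increasing; lra); lra.
Qed.

Lemma ln_max x y : 0 < x -> 0 < y -> ln (Rmax x y) = Rmax (ln x) (ln y).
Proof.
  intros. unfold Rmax; destruct (Rle_dec x y), (Rle_dec (ln x) (ln y)); auto.
  - destruct r; [exfalso; apply n; left; apply ln_increasing; auto | subst; auto].
  - assert (ln y < ln x) by (apply ln_increasing; lra); lra.
Qed.

Lemma mul_max w a b : 0 <= w -> w * Rmax a b = Rmax (w * a) (w * b).
Proof. intros. unfold Rmax; repeat destruct Rle_dec; nra. Qed.

Lemma Ef_const t (g : Defs.C bool_top) c : (forall x, g x = c) -> Ef t g = exp c.
Proof.
  intros H; unfold Ef; rewrite !H. destruct (W_props t) as [[? ?] [[? ?] [E|E]]]; rewrite E;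
  pose proof (exp_pos c); unfold Rmax; destruct Rle_dec; nra.
Qed.

Lemma Ef_max t (phi psi chi : Defs.C bool_top) : (forall x, chi x = Rmax (phi x) (psi x)) ->
  Ef t chi = Rmax (Ef t phi) (Ef t psi).
Proof.
  intros H; unfold Ef; rewrite !H, !exp_max.
  destruct (W_props t) as [[? ?] [[? ?] _]]. rewrite !mul_max by lra.
  set (a := W0 t * exp (phi true)). set (b := W0 t * exp (psi true)).
  set (c := W1 t * exp (phi false)). set (d := W1 t * exp (psi false)).
  unfold Rmax; repeat destruct Rle_dec; lra.
Qed.

Lemma Ef_trans t c (phi chi : Defs.C bool_top) : (forall x, chi x = c + phi x) -> Ef t chi = exp c * Ef t phi.
Proof.
  intros H; unfold Ef; rewrite !H, !exp_plus.
  rewrite mul_max by (left; apply exp_pos). f_equal; ring.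
Qed.

Definition mu (t : R) : I bool_top.
Proof.
  refine (exist _ (fun g => ln (Ef t g)) _).
  split; [|split].
  - intros phi c H. rewrite (Ef_const t phi c H). apply ln_exp.
  - intros phi psi chi H. rewrite (Ef_max t phi psi chi H). apply ln_max; apply Ef_pos.
  - intros c phi chi H. rewrite (Ef_trans t c phi chi H), ln_mult, ln_exp; auto.
    apply exp_pos. apply Ef_pos.
Defined.

Lemma Rmax_alt x y : Rmax x y = (x + y + Rabs (x - y)) / 2.
Proof. unfold Rmax, Rabs; repeat destruct Rle_dec; repeat destruct Rcase_abs; lra. Qed.
Lemma Rmin_alt x y : Rmin x y = (x + y - Rabs (x - y)) / 2.
Proof. unfold Rmin, Rabs; repeat destruct Rle_dec; repeat destruct Rcase_abs; lra. Qed.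

Lemma cont_ext f g x : (forall y, f y = g y) -> continuity_pt f x -> continuity_pt g x.
Proof. intros H; replace g with f; auto. apply functional_extensionality; auto. Qed.

Lemma cont_cst c x : continuity_pt (fun _ => c) x.
Proof. apply continuity_pt_const; intros ? ?; reflexivity. Qed.

Lemma cont_abs f x : continuity_pt f x -> continuity_pt (fun y => Rabs (f y)) x.
Proof. intros H. apply (continuity_pt_comp f Rabs x H). apply Rcontinuity_abs. Qed.

Lemma cont_max f g x : continuity_pt f x -> continuity_pt g x ->
  continuity_pt (fun y => Rmax (f y) (g y)) x.
Proof.
  intros Hf Hg. apply cont_ext with (fun y => (f y + g y + Rabs (f y - g y)) * / 2).
  { intros; rewrite Rmax_alt; reflexivity. }
  apply (continuity_pt_mult (fun y => f y + g y + Rabs (f y - g y)) (fun _ => /2)); [|apply cont_cst].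
  apply (continuity_pt_plus (fun y => f y + g y) (fun y => Rabs (f y - g y))).
  - apply (continuity_pt_plus f g); auto.
  - apply cont_abs. apply (continuity_pt_minus f g); auto.
Qed.

Lemma cont_min f g x : continuity_pt f x -> continuity_pt g x ->
  continuity_pt (fun y => Rmin (f y) (g y)) x.
Proof.
  intros Hf Hg. apply cont_ext with (fun y => (f y + g y - Rabs (f y - g y)) * / 2).
  { intros; rewrite Rmin_alt; reflexivity. }
  apply (continuity_pt_mult (fun y => f y + g y - Rabs (f y - g y)) (fun _ => /2)); [|apply cont_cst].
  apply (continuity_pt_minus (fun y => f y + g y) (fun y => Rabs (f y - g y))).
  - apply (continuity_pt_plus f g); auto.
  - apply cont_abs. apply (continuity_pt_minus f g); auto.
Qed.

Lemma cont_id x : continuity_pt (fun y => y) x.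
Proof. apply derivable_continuous_pt. exists 1. apply derivable_pt_lim_id. Qed.

Lemma cont_W0 x : continuity_pt W0 x.
Proof.
  unfold W0. apply cont_min; [apply cont_cst|]. apply cont_max; [apply cont_cst|].
  apply (continuity_pt_minus (fun _ => 1) (fun y => y)); [apply cont_cst|apply cont_id].
Qed.
Lemma cont_W1 x : continuity_pt W1 x.
Proof.
  unfold W1. apply cont_min; [apply cont_cst|]. apply cont_max; [apply cont_cst|].
  apply (continuity_pt_plus (fun _ => 1) (fun y => y)); [apply cont_cst|apply cont_id].
Qed.

Lemma cont_mu (g : Defs.C bool_top) x : continuity_pt (fun t => proj1_sig (mu t) g) x.
Proof.
  simpl. apply (continuity_pt_comp (fun t => Ef t g) ln x).
  - unfold Ef. apply cont_max.
    + apply (continuity_pt_mult W0 (fun _ => exp (g true))); [apply cont_W0|apply cont_cst].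
    + apply (continuity_pt_mult W1 (fun _ => exp (g false))); [apply cont_W1|apply cont_cst].
  - apply derivable_continuous_pt. exists (/ Ef x g). apply derivable_pt_lim_ln. apply Ef_pos.
Qed.

Lemma cont_open (f : R -> R) (Hf : forall t, continuity_pt f t) (U : R -> Prop) :
  R_open U -> R_open (fun t => U (f t)).
Proof.
  intros HU t Ht. destruct (HU (f t) Ht) as [e [He He2]].
  destruct (Hf t e He) as [d [Hd Hd']].
  exists d. split; auto. intros y Hy.
  destruct (Req_dec y t) as [->|Hne]; auto.
  apply He2. apply (Hd' y). split; [split; [exact Logic.I| auto]|exact Hy].
Qed.

Lemma mu_open (U : I bool_top -> Prop) : open (I bool_top) U -> R_open (fun t => U (mu t)).
Proof.
  simpl. induction 1.
  - destruct H as [phi [V [HV HUV]]].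
    intros t Ht. apply HUV in Ht.
    destruct (cont_open _ (cont_mu phi) V HV t Ht) as [e [He H']].
    exists e; split; auto. intros y Hy; apply HUV; apply H'; auto.
  - apply R_open_full.
  - apply R_open_inter; auto.
  - intros t [U [FU Ut]]. destruct (H0 U FU t Ut) as [e [He H']].
    exists e; split; auto. intros y Hy; exists U; split; auto.
Qed.

Lemma glb_ex (S : R -> Prop) : (exists s, S s) -> (forall s, S s -> 0 <= s) ->
  exists m0, (forall s, S s -> m0 <= s) /\ (forall z, m0 < z -> exists s, S s /\ s < z).
Proof.
  intros [s0 Hs0] Hpos.
  destruct (completeness (fun x => S (- x))) as [l [Hub Hl]].
  - exists 0. intros x Hx. apply Hpos in Hx. lra.
  - exists (- s0). rewrite Ropp_involutive. auto.
  - exists (- l). split.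
    + intros s Hs. assert (- s <= l) by (apply Hub; rewrite Ropp_involutive; auto). lra.
    + intros z Hz. apply NNPP; intro Hn.
      assert (l <= - z).
      { apply Hl. intros x Hx. apply NNPP; intro Hc. apply Hn. exists (- x). split; auto. lra. }
      lra.
Qed.

Definition pt (a b : R) := mkC (fun x => if x then a else b).

Lemma surj (nu : I bool_top) : exists t, -1 <= t <= 1 /\ nu = mu t.
Proof.
  destruct nu as [m [H1 [H2 H3]]].
  set (h := fun y => m (pt 0 y)). set (E := fun y => exp (h y)).
  assert (Ha : forall g : Defs.C bool_top, m g = g true + h (g false - g true)).
  { intros g. apply H3. intros [|]; cbn -[Rplus Rminus]; lra. }
  assert (Hb : forall y L c, 0 <= L -> 0 <= c -> E y = Rmax (E (y - L)) (E (y + c) * exp (- c))).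
  { intros y L c HL Hc.
    replace (E (y + c) * exp (- c)) with (exp (h (y + c) + - c)) by (unfold E; rewrite exp_plus; ring).
    unfold E. rewrite <- exp_max. f_equal. unfold h. rewrite (H2 (pt 0 (y - L)) (pt (-c) y) (pt 0 y)).
    - f_equal. rewrite (Ha (pt (-c) y)). simpl. unfold h. replace (y - - c) with (y + c) by ring. ring.
    - intros [|]; simpl; unfold Rmax; repeat destruct Rle_dec; lra. }
  assert (Epos : forall y, 0 < E y) by (intros; apply exp_pos).
  assert (mono : forall a b, a <= b -> E a <= E b).
  { intros a b Hab. rewrite (Hb b (b - a) 0) by lra. replace (b - (b - a)) with a by ring. apply Rmax_l. }
  assert (mono2 : forall a b, a <= b -> E b * exp (- b) <= E a * exp (- a)).
  { intros a b Hab. rewrite (Hb a 0 (b - a)) by lra. replace (a + (b - a)) with b by ring.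
    apply Rle_trans with (E b * exp (- (b - a)) * exp (- a)).
    - right. rewrite Rmult_assoc, <- exp_plus. f_equal. f_equal. ring.
    - apply Rmult_le_compat_r; [left; apply exp_pos|apply Rmax_r]. }
  destruct (glb_ex (fun s => exists L, 0 <= L /\ s = E (- L))) as [P [HP1 HP2]].
  { exists (E 0). exists 0. split; [lra|]. f_equal; ring. }
  { intros s [L [_ ->]]. left; apply Epos. }
  destruct (glb_ex (fun s => exists c, 0 <= c /\ s = E c * exp (- c))) as [Q [HQ1 HQ2]].
  { exists (E 0 * exp (- 0)). exists 0. split; [lra|]. reflexivity. }
  { intros s [c [_ ->]]. left; apply Rmult_lt_0_compat; [apply Epos|apply exp_pos]. }
  assert (HE : forall y, E y = Rmax P (Q * exp y)).
  { intro y. apply Rle_antisym.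
    - apply Rnot_lt_le; intro Hlt.
      destruct (HP2 (E y)) as [s [[L [HL ->]] Hs]]. { eapply Rle_lt_trans; [apply Rmax_l|exact Hlt]. }
      destruct (HQ2 (E y * exp (- y))) as [s [[c [Hc ->]] Hs']].
      { apply Rle_lt_trans with (Rmax P (Q * exp y) * exp (- y)).
        - rewrite Rmult_comm, mul_max by (left; apply exp_pos).
          apply Rle_trans with (exp (- y) * (Q * exp y)); [|apply Rmax_r].
          right. rewrite <- Rmult_assoc, (Rmult_comm _ Q), Rmult_assoc, <- exp_plus.
          replace (- y + y) with 0 by ring. rewrite exp_0; ring.
        - apply Rmult_lt_compat_r; [apply exp_pos|exact Hlt]. }
      assert (T1 : E (y - (L + Rabs y + y)) < E y).
      { eapply Rle_lt_trans; [|exact Hs]. apply mono. pose proof (Rabs_pos y); lra. }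
      assert (T2 : E (y + (Rmax c y - y)) * exp (- (Rmax c y - y)) < E y).
      { replace (y + (Rmax c y - y)) with (Rmax c y) by ring.
        pose proof (mono2 c (Rmax c y) (Rmax_l c y)) as M2.
        replace (exp (- (Rmax c y - y))) with (exp (- Rmax c y) * exp y) by (rewrite <- exp_plus; f_equal; ring).
        replace (E y) with (E y * exp (- y) * exp y) by (rewrite Rmult_assoc, <- exp_plus; replace (-y + y) with 0 by ring; rewrite exp_0; ring).
        rewrite <- Rmult_assoc. apply Rmult_lt_compat_r; [apply exp_pos|]. lra. }
      pose proof (Hb y (L + Rabs y + y) (Rmax c y - y)) as HB.
      rewrite HB in T1; [| pose proof (Rabs_pos y); unfold Rabs in *; destruct Rcase_abs; lra | unfold Rmax; destruct Rle_dec; lra].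
      rewrite HB in T2; [| pose proof (Rabs_pos y); unfold Rabs in *; destruct Rcase_abs; lra | unfold Rmax; destruct Rle_dec; lra].
      revert T1 T2. generalize (E (y - (L + Rabs y + y))), (E (y + (Rmax c y - y)) * exp (- (Rmax c y - y))).
      intros u v. unfold Rmax; destruct Rle_dec; lra.
    - apply Rmax_lub.
      + apply Rle_trans with (E (- Rabs y)); [apply HP1; exists (Rabs y); split; [apply Rabs_pos|reflexivity]|].
        apply mono. unfold Rabs; destruct Rcase_abs; lra.
      + pose proof (HQ1 (E (Rabs y) * exp (- Rabs y))) as HQ.
        assert (Q <= E (Rabs y) * exp (- Rabs y)) by (apply HQ; exists (Rabs y); split; [apply Rabs_pos|reflexivity]).
        pose proof (mono2 y (Rabs y) (Rle_abs y)).
        apply Rle_trans with (E y * exp (- y) * exp y).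
        * apply Rmult_le_compat_r; [left; apply exp_pos|lra].
        * right. rewrite Rmult_assoc, <- exp_plus. replace (-y + y) with 0 by ring. rewrite exp_0; ring. }
  assert (E0 : E 0 = 1). { unfold E, h. rewrite (H1 (pt 0 0) 0) by (intros [|]; reflexivity). apply exp_0. }
  pose proof (HE 0) as HE0. rewrite E0, exp_0, Rmult_1_r in HE0.
  assert (P0 : 0 <= P).
  { apply Rnot_lt_le; intro Hn. destruct (HP2 0 Hn) as [s [[L [_ ->]] Hs]]. pose proof (Epos (- L)). lra. }
  assert (Q0 : 0 <= Q).
  { apply Rnot_lt_le; intro Hn. destruct (HQ2 0 Hn) as [s [[c [_ ->]] Hs]].
    pose proof (Epos c); pose proof (exp_pos (- c)). nra. }
  assert (fin : W0 0 = W0 0 -> forall t, W0 t = P -> W1 t = Q -> exist is_maxplus m (conj H1 (conj H2 H3)) = mu t).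
  { intros _ t EW0 EW1. apply sig_ext. apply functional_extensionality; intro g. simpl. unfold Ef.
    rewrite EW0, EW1, (Ha g). set (d := g false - g true).
    replace (g false) with (g true + d) by (unfold d; lra).
    rewrite exp_plus. replace (P * exp (g true)) with (exp (g true) * P) by ring.
    replace (Q * (exp (g true) * exp d)) with (exp (g true) * (Q * exp d)) by ring.
    rewrite <- mul_max by (left; apply exp_pos). rewrite <- HE. unfold E.
    rewrite ln_mult, !ln_exp; [reflexivity|apply exp_pos|apply exp_pos]. }
  destruct (Req_dec P 1) as [HP|HP].
  - exists (Q - 1). split; [unfold Rmax in HE0; destruct Rle_dec; lra|].
    apply fin; auto; unfold W0, W1, Rmax, Rmin in *; repeat destruct Rle_dec; lra.
  - exists (1 - P). split; [unfold Rmax in HE0; destruct Rle_dec; lra|].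
    apply fin; auto; unfold W0, W1, Rmax, Rmin in *; repeat destruct Rle_dec; lra.
Qed.

Lemma I_compact : Defs.compact (I bool_top).
Proof.
  intros F HF Hc.
  pose (Uc := fun t => proj1_sig (constructive_indefinite_description _ (Hc (mu t)))).
  assert (HUc : forall t, F (Uc t) /\ Uc t (mu t)).
  { intro t. unfold Uc. destruct (constructive_indefinite_description _ (Hc (mu t))); simpl; auto. }
  pose (fam := mkfamily (fun t => -1 <= t <= 1) (fun x y => (-1 <= x <= 1) /\ Uc x (mu y))
                 (fun x H => match H with ex_intro _ _ (conj h _) => h end)).
  destruct (compact_P3 (-1) 1 fam) as [D [Hcov [l Hl]]].
  { split.
    - intros x Hx. exists x. simpl. split; auto. apply HUc.
    - intros x y [Hx Hy]. destruct (HUc x) as [FU _].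
      destruct (mu_open (Uc x) (HF _ FU) y Hy) as [e [He H']].
      exists (mkposreal e He). intros z Hz. unfold disc in Hz. simpl in Hz. split; auto. }
  exists (map Uc l). split.
  - intros U HU. apply in_map_iff in HU. destruct HU as [x [<- _]]. apply HUc.
  - intros nu. destruct (surj nu) as [t [Ht ->]].
    destruct (Hcov t Ht) as [y [[Hy HUy] HD]].
    exists (Uc y). split; auto. apply in_map. apply Hl. split; auto.
Qed.

Lemma I_CH : CompHaus (I bool_top).
Proof. split; [apply I_compact | apply pw_hausdorff]. Qed.

Definition nu (u : R) : I bool_top.
Proof.
  refine (exist _ (fun g : Defs.C bool_top => Rmax (g true) (g false + Rmin 0 u)) _).
  split; [|split].
  - intros phi c H. rewrite !H. rmm.
  - intros phi psi chi H. rewrite !H. rmm.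
  - intros c phi chi H. rewrite !H. rmm.
Defined.

Definition fmap : cmap bool_top (I bool_top) :=
  {| cfun := fun b : bool_top => if b then @deltaI bool_top true else nu (-1);
     cfun_cont := fun V _ => Logic.I |}.

Lemma zeta_M : zeta (I_map fmap (nu (-1))) = nu (-2).
Proof.
  apply sig_ext; simpl. apply functional_extensionality; intro phi. rmm.
Qed.

Lemma main_contra (hIX : CompHaus (I bool_top)) :
  ~ exists k : forall X : TopSpace, I X -> J X,
      (forall X : TopSpace, CompHaus X ->
          continuous (k X) /\
          exists g : J X -> I X, continuous g /\
            (forall m, g (k X m) = m) /\ (forall n, k X (g n) = n)) /\
      (forall (X Y : TopSpace) (f : cmap X Y), CompHaus X -> CompHaus Y ->
          forall m : I X, k Y (I_map f m) = J_map f (k X m)) /\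
      (forall X : TopSpace, CompHaus X -> forall x : X, k X (@deltaI X x) = @deltaJ X x) /\
      (forall (X : TopSpace) (hk : continuous (k X)), CompHaus X ->
          forall M : I (I X),
            k X (@zeta X M) = @psi X (J_map {| cfun := k X; cfun_cont := hk |} (k (I X) M))).
Proof.
  intros [k [Hiso [Hnat [Hunit Hmult]]]].
  destruct (Hiso bool_top bool_CH) as [hk [g [_ [Hg _]]]].
  pose proof (Hmult bool_top hk bool_CH (I_map fmap (nu (-1)))) as E.
  rewrite zeta_M, (Hnat bool_top (I bool_top) fmap bool_CH hIX) in E.
  assert (E2 : k bool_top (nu (-2)) = k bool_top (nu (-1))).
  { rewrite E. apply sig_ext. apply functional_extensionality; intro phi.
    destruct (k bool_top (nu (-1))) as [m Hm] eqn:Hk. simpl.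
    apply (J_key m Hm).
    - simpl. rewrite (Hunit bool_top bool_CH true). reflexivity.
    - simpl. rewrite Hk. reflexivity. }
  apply (f_equal g) in E2. rewrite !Hg in E2.
  apply (f_equal (fun mu => proj1_sig mu (mkC (fun b => if b then 0 else 2)))) in E2.
  simpl in E2. revert E2. rmm.
Qed.

Theorem mainTheorem17 :
  ~ exists k : forall X : TopSpace, I X -> J X,
      (forall X : TopSpace, CompHaus X ->
          continuous (k X) /\
          exists g : J X -> I X, continuous g /\
            (forall m, g (k X m) = m) /\ (forall n, k X (g n) = n)) /\
      (forall (X Y : TopSpace) (f : cmap X Y), CompHaus X -> CompHaus Y ->
          forall m : I X, k Y (I_map f m) = J_map f (k X m)) /\
      (forall X : TopSpace, CompHaus X -> forall x : X, k X (@deltaI X x) = @deltaJ X x) /\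
      (forall (X : TopSpace) (hk : continuous (k X)), CompHaus X ->
          forall M : I (I X),
            k X (@zeta X M) = @psi X (J_map {| cfun := k X; cfun_cont := hk |} (k (I X) M))).
Proof. exact (main_contra I_CH). Qed.
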